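(* Let $S\subset[0,\infty)$ with $0\in S$, and let $f\colon S\to[0,\infty)$ be a right-continuous decreasing function with $DP(\overline{f})\subset S$. Let $a,b\in S$ with $a<b$. Then: (1) If $0\leq\lambda<f(a)-f(b-)$, then for every $\mu>0$ there exists $c\in[a,b)\cap S$ with $\lambda<f(a)-f(c)$ and $f(a)-f(c-)<\lambda+\mu$. (2) For every $\varepsilon>0$ there exists a finite subset $F'=\{a=x'_0<x'_1<\cdots<x'_k=b\}\subset S$ such that $\max_{1\leq i\leq k}\{f(x'_{i-1})-f(x'_i-)\}<\varepsilon$.
   Context: For $S\subset[0,\infty)$ with $0\in S$, a function on $S$ is right-continuous if it is right-continuous for the relative topology of $S$. For a right-continuous decreasing $f\colon S\to[0,\infty)$ and $x\in\overline{S}$ (closure in $\mathbb{R}$), set $f(x+):=\sup\{f(y)\mid y\in(x,\infty)\cap S\}$ whenever $(x,\infty)\cap S\neq\emptyset$, and $f(x-):=\inf\{f(y)\mid y\in[0,x)\cap S\}$ if $x\neq0$, $f(0-):=f(0)$. Define $\overline{f}\colon\overline{S}\to[0,\infty)$ by $\overline{f}(x)=f(x)$ if $x\in S$, $\overline{f}(x)=f(x+)$ if $x\in\overline{S}\setminus S$ is a right accumulation point of $S$, and $\overline{f}(x)=f(x-)$ otherwise. With $\overline{f}(x-)$ defined by the same formula applied to $\overline{f}$ on $\overline{S}$, the set of left-jump points is $DP(\overline{f}):=\{x\in\overline{S}\setminus\{0\}\mid \overline{f}(x-)>\overline{f}(x)\}$. *)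

(* Defs.v *)
From Stdlib Require Import Reals Lra ClassicalEpsilon.
From Coquelicot Require Import Coquelicot.
Open Scope R_scope.

Definition closureR (S : R -> Prop) (x : R) : Prop :=
  forall eps, 0 < eps -> exists y, S y /\ Rabs (y - x) < eps.

Definition right_acc (S : R -> Prop) (x : R) : Prop :=
  forall eps, 0 < eps -> exists y, S y /\ x < y < x + eps.

Definition decreasing_on (S : R -> Prop) (f : R -> R) : Prop :=
  forall x y, S x -> S y -> x <= y -> f y <= f x.

Definition right_continuous_on (S : R -> Prop) (f : R -> R) : Prop :=
  forall x, S x -> forall eps, 0 < eps ->
    exists delta, 0 < delta /\
      forall y, S y -> x <= y < x + delta -> Rabs (f y - f x) < eps.

Definition right_lim (S : R -> Prop) (f : R -> R) (x : R) : R :=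
  real (Lub_Rbar (fun r => exists y, S y /\ x < y /\ r = f y)).

Definition left_lim (S : R -> Prop) (f : R -> R) (x : R) : R :=
  if Req_EM_T x 0 then f 0
  else real (Glb_Rbar (fun r => exists y, S y /\ 0 <= y < x /\ r = f y)).

(* the extension \overline{f} of f to the closure of S *)
Definition fbar (S : R -> Prop) (f : R -> R) (x : R) : R :=
  if excluded_middle_informative (S x) then f x
  else if excluded_middle_informative (right_acc S x) then right_lim S f x
  else left_lim S f x.

Definition DP (S : R -> Prop) (f : R -> R) (x : R) : Prop :=
  closureR S x /\ x <> 0 /\
  left_lim (closureR S) (fbar S f) x > fbar S f x.

(* Main.v *)
Require Import Defs.
From Stdlib Require Import Reals Lra Lia Classical ClassicalEpsilon.
From Coquelicot Require Import Coquelicot.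
Open Scope R_scope.

Lemma glb_props (E : R -> Prop) e0 m : E e0 -> (forall e, E e -> m <= e) ->
  m <= real (Glb_Rbar E) /\ (forall e, E e -> real (Glb_Rbar E) <= e) /\
  (forall r, real (Glb_Rbar E) < r -> exists e, E e /\ e < r).
Proof.
  intros H0 Hm. destruct (Glb_Rbar_correct E) as [Hlb Hglb].
  assert (H1 := Hlb e0 H0).
  assert (H2 : Rbar_le m (Glb_Rbar E)) by (apply Hglb; intros e He; apply Hm, He).
  destruct (Glb_Rbar E) as [g| |]; simpl in *; try contradiction.
  split; [exact H2|split].
  - intros e He. exact (Hlb e He).
  - intros r Hr. apply NNPP; intros Hn.
    assert (r <= g).
    { apply (Hglb (Finite r)). intros e He. simpl. apply Rnot_lt_le. intros Hl. apply Hn. exists e; auto. }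
    lra.
Qed.

Lemma lub_props (E : R -> Prop) e0 M : E e0 -> (forall e, E e -> e <= M) ->
  (forall e, E e -> e <= real (Lub_Rbar E)) /\
  (forall r, r < real (Lub_Rbar E) -> exists e, E e /\ r < e).
Proof.
  intros H0 Hm. destruct (Lub_Rbar_correct E) as [Hub Hlub].
  assert (H1 := Hub e0 H0).
  assert (H2 : Rbar_le (Lub_Rbar E) M) by (apply Hlub; intros e He; apply Hm, He).
  destruct (Lub_Rbar E) as [g| |]; simpl in *; try contradiction.
  split.
  - intros e He. exact (Hub e He).
  - intros r Hr. apply NNPP; intros Hn.
    assert (g <= r).
    { apply (Hlub (Finite r)). intros e He. simpl. apply Rnot_lt_le. intros Hl. apply Hn. exists e; auto. }
    lra.
Qed.

Lemma LL (S' : R -> Prop) (f' : R -> R) x mm : S' 0 -> 0 < x ->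
  (forall y, S' y -> 0 <= y < x -> mm <= f' y) -> mm <= left_lim S' f' x.
Proof.
  intros H0 Hx Hb. unfold left_lim. destruct (Req_EM_T x 0); [lra|].
  refine (proj1 (glb_props _ (f' 0) mm _ _)).
  - exists 0. repeat split; auto; lra.
  - intros e [y [Hy [Hy2 ->]]]. apply Hb; auto.
Qed.

Lemma part1 (S : R -> Prop) (f : R -> R)
  (HS0 : S 0) (HSpos : forall x, S x -> 0 <= x)
  (Hfpos : forall x, S x -> 0 <= f x)
  (Hdec : decreasing_on S f) (Hrc : right_continuous_on S f)
  (HDP : forall x, DP S f x -> S x)
  (a b : R) (Ha : S a) (Hb : S b) (Hab : a < b) :
  (forall lam, 0 <= lam < f a - left_lim S f b ->
     forall mu, 0 < mu ->
       exists c, S c /\ a <= c < b /\ lam < f a - f c /\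
                 f a - left_lim S f c < lam + mu).
Proof.
  intros lam [Hl0 Hl1] mu Hmu.
  assert (Ha0 := HSpos a Ha).
  set (m := f a - lam).
  set (T := fun y => S y /\ a <= y <= b /\ f y < m).
  assert (Hfbll : f b <= left_lim S f b).
  { apply LL; auto; try lra. intros y Hy Hy2. apply Hdec; auto; lra. }
  assert (HTb : T b) by (unfold T, m; repeat split; auto; lra).
  destruct (glb_props T b a HTb) as [Hca [HcT Happ]].
  { intros e [_ [He _]]; lra. }
  set (c := real (Glb_Rbar T)) in *.
  assert (Hcb : c <= b) by (apply HcT; auto).
  assert (K : forall y, S y -> y < c -> m <= f y).
  { intros y Hy Hyc. destruct (Rlt_or_le y a) as [Hya|Hya].
    - assert (f a <= f y) by (apply Hdec; auto; lra). unfold m; lra.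
    - apply Rnot_lt_le; intros Hf. assert (c <= y) by (apply HcT; unfold T; repeat split; auto; lra). lra. }
  destruct (classic (T c)) as [HTc|HTc].
  - destruct HTc as [HSc [[Hac Hcb'] Hfc]].
    assert (Hac' : a < c).
    { destruct Hac as [Hac| <-]; auto. unfold m in Hfc; lra. }
    assert (Hcb2 : c < b).
    { destruct Hcb as [Hcb| ->]; auto.
      assert (m <= left_lim S f b) by (apply LL; auto; try lra; intros y Hy Hy2; apply K; auto; lra).
      unfold m in H; lra. }
    exists c. split; auto. split; [lra|]. split; [unfold m in Hfc; lra|].
    assert (m <= left_lim S f c) by (apply LL; auto; try lra; intros y Hy Hy2; apply K; auto; lra).
    unfold m in H; lra.
  - assert (Hcb2 : c < b).
    { destruct Hcb as [Hcb| Hcb]; auto. exfalso. apply HTc. rewrite Hcb. exact HTb. }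
    assert (HcS : S c -> m <= f c).
    { intros HSc. apply Rnot_lt_le; intros Hf. apply HTc. unfold T; repeat split; auto; lra. }
    assert (D : exists d, c < d /\ forall y, S y -> c < y < d -> m - mu/2 < f y).
    { destruct (classic (S c)) as [HSc|HSc].
      - destruct (Hrc c HSc (mu/2)) as [delta [Hd Hdel]]; [lra|].
        exists (c + delta). split; [lra|]. intros y Hy Hy2.
        assert (H := Hdel y Hy ltac:(lra)). apply Rabs_def2 in H. specialize (HcS HSc). lra.
      - assert (Hc0 : c <> 0) by (intros E; apply HSc; rewrite E; auto).
        assert (Hcl : closureR S c).
        { intros eps Heps. destruct (Happ (c + eps)) as [t [Tt Ht3]]; [lra|].
          assert (c <= t) by (apply HcT; auto). destruct Tt as [Ht _].
          exists t. split; auto.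
          rewrite Rabs_right; lra. }
        assert (Hra : right_acc S c).
        { intros eps Heps. destruct (Happ (c + eps)) as [t [Tt Ht3]]; [lra|].
          assert (c <= t) by (apply HcT; auto). destruct Tt as [Ht _].
          exists t. split; auto. split; [|lra]. destruct H; auto. subst. contradiction. }
        assert (E : m <= left_lim (closureR S) (fbar S f) c).
        { apply LL; [| lra |].
          - intros eps Heps. exists 0. split; auto. rewrite Rminus_0_r, Rabs_R0; lra.
          - intros y Hy Hy2. unfold fbar.
            destruct (excluded_middle_informative (S y)) as [HSy|HSy].
            + apply K; auto; lra.
            + destruct (excluded_middle_informative (right_acc S y)) as [Hry|Hry].
              * destruct (Hry (c - y)) as [w [Hw Hw2]]; [lra|].
                unfold right_lim.
                destruct (lub_props (fun r => exists y0, S y0 /\ y < y0 /\ r = f y0) (f w) (f 0)) as [Hu _].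
                { exists w; split; auto; lra. }
                { intros e [z [Hz [Hz2 ->]]]. apply Hdec; auto; lra. }
                assert (f w <= real (Lub_Rbar (fun r => exists y0, S y0 /\ y < y0 /\ r = f y0))).
                { apply Hu. exists w; split; auto; lra. }
                assert (m <= f w) by (apply K; auto; lra). lra.
              * assert (Hy0 : 0 < y).
                { destruct (proj1 Hy2) as [H|H]; auto. subst. contradiction. }
                apply LL; auto. intros z Hz Hz2. apply K; auto; lra. }
        assert (HnDP : ~ DP S f c) by (intros H; apply HSc, HDP, H).
        assert (Hfb : m <= fbar S f c).
        { apply Rnot_lt_le. intros Hlt. apply HnDP. split; auto. split; auto. unfold Rgt. lra. }
        unfold fbar in Hfb.
        destruct (excluded_middle_informative (S c)); [contradiction|].
        destruct (excluded_middle_informative (right_acc S c)); [|contradiction].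
        unfold right_lim in Hfb.
        destruct (lub_props (fun r => exists y0, S y0 /\ c < y0 /\ r = f y0) (f b) (f 0)) as [_ Hu].
        { exists b; split; auto; lra. }
        { intros e [z [Hz [Hz2 ->]]]. apply Hdec; auto; lra. }
        destruct (Hu (m - mu/2)) as [e [[z [Hz [Hz2 ->]]] Hez]]; [lra|].
        exists z. split; auto. intros y Hy Hy2. assert (f z <= f y) by (apply Hdec; auto; lra). lra. }
    destruct D as [d [Hcd Hd]].
    destruct (Happ (Rmin d b)) as [t [Tt Ht]].
    { apply Rmin_glb_lt; auto. }
    assert (Hct : c <= t) by (apply HcT; auto).
    assert (Hct' : c < t) by (destruct Hct as [H|H]; auto; subst; contradiction).
    assert (Htd : t < d) by (eapply Rlt_le_trans; [exact Ht| apply Rmin_l]).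
    assert (Htb : t < b) by (eapply Rlt_le_trans; [exact Ht| apply Rmin_r]).
    destruct Tt as [HSt [[Hat _] Hft]].
    exists t. split; auto. split; [lra|]. split; [unfold m in Hft; lra|].
    assert (m - mu/2 <= left_lim S f t).
    { apply LL; auto; try lra. intros y Hy Hy2.
      destruct (Rtotal_order y c) as [H|[H|H]].
      - assert (m <= f y) by (apply K; auto). lra.
      - subst y. assert (m <= f c) by (apply HcS; auto). lra.
      - assert (m - mu/2 < f y) by (apply Hd; auto; lra). lra. }
    unfold m in H. lra.
Qed.

Lemma part2 (S : R -> Prop) (f : R -> R)
  (HS0 : S 0) (HSpos : forall x, S x -> 0 <= x)
  (Hfpos : forall x, S x -> 0 <= f x)
  (Hdec : decreasing_on S f) (Hrc : right_continuous_on S f)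
  (HDP : forall x, DP S f x -> S x)
  (b : R) (Hb : S b) (eps : R) (Heps : 0 < eps) :
  forall n a, S a -> a < b -> f a <= INR n * (eps/2) ->
     exists (k : nat) (x : nat -> R),
       x 0%nat = a /\ x k = b /\
       (forall i, (i < k)%nat -> x i < x (i + 1)%nat) /\
       (forall i, (i <= k)%nat -> S (x i)) /\
       (forall i, (1 <= i <= k)%nat -> f (x (i - 1)%nat) - left_lim S f (x i) < eps).
Proof.
  assert (Hll0 : 0 <= left_lim S f b).
  { destruct (Req_dec b 0) as [E|E].
    - unfold left_lim. destruct (Req_EM_T b 0); [auto|contradiction].
    - apply LL; auto. assert (H := HSpos b Hb). lra. }
  induction n; intros a Ha Hab Hfa.
  - exists 1%nat, (fun i => match i with 0%nat => a | _ => b end).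
    split; [reflexivity|]. split; [reflexivity|]. split.
    { intros i Hi. assert (i = 0%nat) by lia. subst. simpl. exact Hab. }
    split. { intros i Hi. destruct i; auto. }
    intros i Hi. assert (i = 1%nat) by lia. subst. simpl. simpl in Hfa. lra.
  - destruct (Rlt_or_le (f a - left_lim S f b) eps) as [Hd|Hd].
    + exists 1%nat, (fun i => match i with 0%nat => a | _ => b end).
      split; [reflexivity|]. split; [reflexivity|]. split.
      { intros i Hi. assert (i = 0%nat) by lia. subst. simpl. exact Hab. }
      split. { intros i Hi. destruct i; auto. }
      intros i Hi. assert (i = 1%nat) by lia. subst. simpl. exact Hd.
    + destruct (part1 S f HS0 HSpos Hfpos Hdec Hrc HDP a b Ha Hb Hab (eps/2) ltac:(lra) (eps/2) ltac:(lra))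
        as [c [Hc [[Hac Hcb] [H1 H2]]]].
      rewrite S_INR in Hfa.
      destruct (IHn c Hc Hcb ltac:(lra)) as [k [xs [X0 [Xk [Xinc [XS XJ]]]]]].
      exists (Datatypes.S k), (fun i => match i with 0%nat => a | Datatypes.S j => xs j end).
      split; [reflexivity|]. split; [exact Xk|]. split.
      { intros i Hi. destruct i as [|j].
        - simpl. rewrite X0. destruct Hac as [H|H]; auto. subst. lra.
        - replace (Datatypes.S j + 1)%nat with (Datatypes.S (j + 1)) by lia. apply Xinc. lia. }
      split. { intros i Hi. destruct i as [|j]; auto. apply XS. lia. }
      intros i Hi. destruct i as [|j]; [lia|]. destruct j as [|j].
      + simpl. rewrite X0. lra.
      + replace (Datatypes.S (Datatypes.S j) - 1)%nat with (Datatypes.S j) by lia.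
        assert (H := XJ (Datatypes.S j) ltac:(lia)). replace (Datatypes.S j - 1)%nat with j in H by lia. exact H.
Qed.

Theorem lemma2p4 (S : R -> Prop) (f : R -> R)
  (HS0 : S 0) (HSpos : forall x, S x -> 0 <= x)
  (Hfpos : forall x, S x -> 0 <= f x)
  (Hdec : decreasing_on S f) (Hrc : right_continuous_on S f)
  (HDP : forall x, DP S f x -> S x)
  (a b : R) (Ha : S a) (Hb : S b) (Hab : a < b) :
  (forall lam, 0 <= lam < f a - left_lim S f b ->
     forall mu, 0 < mu ->
       exists c, S c /\ a <= c < b /\ lam < f a - f c /\
                 f a - left_lim S f c < lam + mu)
  /\
  (forall eps, 0 < eps ->
     exists (k : nat) (x : nat -> R),
       x 0%nat = a /\ x k = b /\
       (forall i, (i < k)%nat -> x i < x (i + 1)%nat) /\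
       (forall i, (i <= k)%nat -> S (x i)) /\
       (forall i, (1 <= i <= k)%nat -> f (x (i - 1)%nat) - left_lim S f (x i) < eps)).
Proof.
  split.
  - exact (part1 S f HS0 HSpos Hfpos Hdec Hrc HDP a b Ha Hb Hab).
  - intros eps Heps.
    destruct (INR_unbounded (f a / (eps/2))) as [n Hn].
    apply (part2 S f HS0 HSpos Hfpos Hdec Hrc HDP b Hb eps Heps n a Ha Hab).
    assert (f a / (eps/2) * (eps/2) = f a) by (field; lra).
    assert (f a / (eps / 2) * (eps/2) <= INR n * (eps/2)) by (apply Rmult_le_compat_r; lra).
    lra.
Qed.
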